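(* For all positive integers $m,n,p,q$, $$\theta(K_{m,n}\times K_{p,q})=\max\{\theta(K_{mp,nq}),\ \theta(K_{mq,np})\}.$$
   Context: The thickness $\theta(G)$ of a graph $G$ is the minimum number of planar subgraphs whose union is $G$. The Kronecker product $G\times H$ of graphs $G$ and $H$ is the graph with vertex set $V(G)\times V(H)$ in which $(g,h)$ and $(g',h')$ are adjacent if and only if $gg'\in E(G)$ and $hh'\in E(H)$. $K_{a,b}$ denotes the complete bipartite graph with parts of sizes $a$ and $b$. *)

(* Defs.v *)
From Stdlib Require Import Reals ClassicalEpsilon.
From mathcomp Require Import all_boot.

Set Implicit Arguments.
Unset Strict Implicit.
Unset Printing Implicit Defensive.

(* A (simple) graph is given by a finite vertex type V and an adjacency
   relation E : rel V (the graphs below are symmetric and irreflexive). *)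

Definition Kbip (a b : nat) : rel ('I_a + 'I_b)%type :=
  fun x y => match x, y with
             | inl _, inr _ | inr _, inl _ => true
             | _, _ => false
             end.

Arguments Kbip : clear implicits.

Definition kron (V W : finType) (E : rel V) (F : rel W) : rel (V * W)%type :=
  fun x y => E x.1 y.1 && F x.2 y.2.

Local Open Scope R_scope.

Definition planar (V : finType) (E : rel V) : Prop :=
  exists (pos : V -> R * R) (arc : V -> V -> R -> R * R),
    injective pos /\
    (forall u v, E u v ->
       continuity (fun t => fst (arc u v t)) /\
       continuity (fun t => snd (arc u v t)) /\
       arc u v 0 = pos u /\ arc u v 1 = pos v /\
       (forall s t, 0 <= s <= 1 -> 0 <= t <= 1 -> arc u v s = arc u v t -> s = t) /\
       (forall t, 0 <= t <= 1 -> arc v u t = arc u v (1 - t)) /\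
       (forall t w, 0 < t < 1 -> arc u v t <> pos w)) /\
    (forall u v x y, E u v -> E x y ->
       ~ ((u = x /\ v = y) \/ (u = y /\ v = x)) ->
       forall s t, 0 < s < 1 -> 0 < t < 1 -> arc u v s <> arc x y t).

Local Close Scope R_scope.

Definition union_of_planar (V : finType) (E : rel V) (k : nat) : Prop :=
  exists F : 'I_k -> rel V,
    (forall i, planar (F i) /\ (forall x y, F i x y -> E x y)) /\
    (forall x y, E x y -> exists i, F i x y).

Definition is_thickness (V : finType) (E : rel V) (t : nat) : Prop :=
  union_of_planar E t /\ (forall k, union_of_planar E k -> t <= k).

Definition thickness (V : finType) (E : rel V) : nat :=
  epsilon (inhabits 0) (is_thickness E).

(* Main.v *)
Require Import Defs.
From Stdlib Require Import Reals ClassicalEpsilon Lra Psatz.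
From mathcomp Require Import all_boot.

Set Implicit Arguments.
Unset Strict Implicit.
Unset Printing Implicit Defensive.

Local Open Scope R_scope.

Definition phi (b : bool) (z : R * R) : R * R :=
  (if b then exp (fst z) else - exp (fst z), snd z).

Lemma phi_inj b z w : phi b z = phi b w -> z = w.
Proof.
case: z w => [a c] [a' c']; rewrite /phi /=; case: b => [] [] H1 H2; subst.
- by rewrite -(ln_exp a) H1 ln_exp.
- have : exp a = exp a' by lra.
  by move=> H; rewrite -(ln_exp a) H ln_exp.
Qed.

Lemma phi_neq z w : phi true z <> phi false w.
Proof.
rewrite /phi => [] [] H _; have := exp_pos (fst z); have := exp_pos (fst w); lra.
Qed.

Lemma cont_exp : continuity exp.
Proof. apply: derivable_continuous; exact: derivable_exp. Qed.

Lemma phi_cont1 b (g : R -> R * R) : continuity (fun t => fst (g t)) ->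
  continuity (fun t => fst (phi b (g t))).
Proof.
move=> H; rewrite /phi /=; case: b.
- exact: (continuity_comp (fun t => fst (g t)) exp H cont_exp).
- apply: continuity_opp.
  exact: (continuity_comp (fun t => fst (g t)) exp H cont_exp).
Qed.

Lemma phi_cont2 b (g : R -> R * R) : continuity (fun t => snd (g t)) ->
  continuity (fun t => snd (phi b (g t))).
Proof. by []. Qed.

Definition posN (V : finType) (x : V) : R * R := (INR (enum_rank x), 0).

Lemma posN_inj (V : finType) : injective (@posN V).
Proof.
move=> x y [] /INR_eq H; apply: enum_rank_inj; exact: val_inj.
Qed.

Lemma planar_single (V : finType) (F : rel V) :
  (forall x y, F x y -> x <> y) ->
  (forall u v x y, F u v -> F x y -> (u = x /\ v = y) \/ (u = y /\ v = x)) ->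
  planar F.
Proof.
move=> Hirr Hone.
exists (@posN V), (fun u v t => (fst (posN u) * (1 - t) + fst (posN v) * t, t * (1 - t))).
split; first exact: (@posN_inj V).
split.
- move=> u v Fuv; rewrite /=.
  have Hne : fst (posN u) <> fst (posN v).
    move=> E; apply: (Hirr _ _ Fuv); apply: (@posN_inj V).
    by rewrite /posN /= in E *; rewrite E.
  split; first by reg.
  split; first by reg.
  split; first by rewrite /posN /=; f_equal; ring.
  split; first by rewrite /posN /=; f_equal; ring.
  split.
    move=> s t _ _ H; injection H as E _.
    rewrite /posN /= in Hne.
    move: Hne E; set a := INR _; set b := INR _ => Hne E.
    have E2 : (b - a) * (s - t) = 0 by nra.
    case: (Rmult_integral _ _ E2) => H; lra.
  split; first by move=> t _; f_equal; ring.
  move=> t w Ht H; injection H as _ H; rewrite /posN /= in H; nra.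
- move=> u v x y Fuv Fxy Hn; by case: (Hn (Hone _ _ _ _ Fuv Fxy)).
Qed.

Lemma planar_pull (V W : finType) (F : rel V) (f : W -> V) :
  injective f -> planar F -> planar (fun a b => F (f a) (f b)).
Proof.
move=> finj [pos [arc [Hinj [Hedge Hdis]]]].
exists (fun a => pos (f a)), (fun a b => arc (f a) (f b)).
split; first by move=> a b /Hinj /finj.
split.
- move=> u v Fuv; have [c1 [c2 [h0 [h1 [hi [hs hw]]]]]] := Hedge _ _ Fuv.
  do 6 (split; first by []). by move=> t w Ht; apply: hw.
- move=> u v x y Fuv Fxy Hn; apply: Hdis => //.
  move=> [[/finj E1 /finj E2]|[/finj E1 /finj E2]]; apply: Hn; by [left|right].
Qed.

Definition dside (V1 V2 : Type) (F1 : V1 -> V1 -> bool) (F2 : V2 -> V2 -> bool)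
  (z w : V1 + V2) : bool :=
  match z, w with
  | inl a, inl b => F1 a b
  | inr a, inr b => F2 a b
  | _, _ => false
  end.

Lemma planar_comb (V V1 V2 : finType) (F : rel V) (F1 : rel V1) (F2 : rel V2)
  (s : V -> V1 + V2) : injective s ->
  (forall x y, F x y -> dside F1 F2 (s x) (s y)) ->
  planar F1 -> planar F2 -> planar F.
Proof.
move=> sinj HF [pos1 [arc1 [Hinj1 [Hedge1 Hdis1]]]] [pos2 [arc2 [Hinj2 [Hedge2 Hdis2]]]].
pose pos x := match s x with inl a => phi true (pos1 a) | inr b => phi false (pos2 b) end.
pose arc u v t := match s u, s v with
  | inl a, inl b => phi true (arc1 a b t)
  | inr a, inr b => phi false (arc2 a b t)
  | _, _ => (0, 0) end.
exists pos, arc.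
split.
  move=> x y; rewrite /pos.
  case Ex: (s x) => [a|a]; case Ey: (s y) => [b|b] => H.
  - by apply: sinj; rewrite Ex Ey (Hinj1 _ _ (phi_inj H)).
  - by case: (phi_neq H).
  - by case: (phi_neq (esym H)).
  - by apply: sinj; rewrite Ex Ey (Hinj2 _ _ (phi_inj H)).
split.
- move=> u v Fuv; have := HF _ _ Fuv; rewrite /arc /pos.
  case Eu: (s u) => [a|a]; case Ev: (s v) => [b|b] //= Fab.
  + have [c1 [c2 [h0 [h1 [hi [hs hw]]]]]] := Hedge1 _ _ Fab.
    split; first exact: (@phi_cont1 true (arc1 a b) c1).
    split; first exact: (@phi_cont2 true (arc1 a b) c2).
    split; first by rewrite h0.
    split; first by rewrite h1.
    split; first by move=> x y Hx Hy /phi_inj; apply: hi.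
    split; first by move=> t Ht; rewrite hs.
    move=> t w Ht; case: (s w) => [c|c] H.
    * exact: (hw t c Ht (phi_inj H)).
    * exact: (phi_neq H).
  + have [c1 [c2 [h0 [h1 [hi [hs hw]]]]]] := Hedge2 _ _ Fab.
    split; first exact: (@phi_cont1 false (arc2 a b) c1).
    split; first exact: (@phi_cont2 false (arc2 a b) c2).
    split; first by rewrite h0.
    split; first by rewrite h1.
    split; first by move=> x y Hx Hy /phi_inj; apply: hi.
    split; first by move=> t Ht; rewrite hs.
    move=> t w Ht; case: (s w) => [c|c] H.
    * exact: (phi_neq (esym H)).
    * exact: (hw t c Ht (phi_inj H)).
- move=> u v x y Fuv Fxy Hn st tt Hs Ht.
  have := HF _ _ Fuv; have := HF _ _ Fxy; rewrite /arc.
  have Hn' : forall a b c d, s u = a -> s v = b -> s x = c -> s y = d ->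
     ~ ((a = c /\ b = d) \/ (a = d /\ b = c)).
    move=> a b c d <- <- <- <- [[/sinj E1 /sinj E2]|[/sinj E1 /sinj E2]];
      apply: Hn; by [left|right].
  move: Hn'.
  case: (s u) => [a|a]; case: (s v) => [b|b]; case: (s x) => [c|c]; case: (s y) => [d|d] //= Hn' Fcd Fab H.
  + apply: (Hdis1 a b c d Fab Fcd _ st tt Hs Ht (phi_inj H)).
    move=> [[E1 E2]|[E1 E2]]; apply: (Hn' _ _ _ _ erefl erefl erefl erefl); [left|right]; split; congruence.
  + exact: (phi_neq H).
  + exact: (phi_neq (esym H)).
  + apply: (Hdis2 a b c d Fab Fcd _ st tt Hs Ht (phi_inj H)).
    move=> [[E1 E2]|[E1 E2]]; apply: (Hn' _ _ _ _ erefl erefl erefl erefl); [left|right]; split; congruence.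
Qed.

Local Close Scope R_scope.

Lemma planar_empty (V : finType) : planar (fun _ _ : V => false).
Proof. by apply: planar_single. Qed.

Lemma union_mono (V : finType) (E : rel V) k k' :
  union_of_planar E k -> k <= k' -> union_of_planar E k'.
Proof.
move=> [F [HF Hc]] hk.
exists (fun i : 'I_k' => match insub (val i) : option 'I_k with
                        | Some j => F j | None => fun _ _ => false end).
split.
- move=> i; case: insubP => [j _ _|_]; first exact: HF.
  by split; [exact: planar_empty|].
- move=> x y Exy; have [j Hj] := Hc _ _ Exy.
  exists (widen_ord hk j); by rewrite /= valK.
Qed.

Lemma union_exists (V : finType) (E : rel V) : irreflexive E ->
  exists k, union_of_planar E k.
Proof.
move=> Hirr; exists #|{: V * V}|.
exists (fun i x y => E x y && ((enum_rank (x, y) == i) || (enum_rank (y, x) == i))).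
split.
- move=> i; split; last by move=> x y /andP [].
  apply: planar_single.
  + by move=> x y /andP [Exy _] Hxy; subst; rewrite Hirr in Exy.
  + move=> u v x y /andP [_ /orP [] /eqP H1] /andP [_ /orP [] /eqP H2];
    rewrite -H2 in H1; move/enum_rank_inj: H1 => [-> ->]; by [left|right].
- move=> x y Exy; exists (enum_rank (x, y)); by rewrite Exy eqxx.
Qed.

Lemma thick_spec (V : finType) (E : rel V) : irreflexive E ->
  is_thickness E (thickness E).
Proof.
move=> Hirr; rewrite /thickness; apply: epsilon_spec.
have [N HN] := union_exists Hirr.
elim: N {-2}N (leqnn N) HN => [|N IH] M HM HUM.
  exists M; split => // k _; move: HM; rewrite leqn0 => /eqP ->; done.
case: (Classical_Prop.classic (exists k, k < M /\ union_of_planar E k)).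
  move=> [k [hk Uk]]; apply: (IH k) => //; exact: (leq_trans hk HM).
move=> Hno; exists M; split => // k Uk; case: (leqP M k) => // hk.
by case: Hno; exists k.
Qed.

Lemma union_restrict (V W : finType) (E : rel V) (E1 : rel W) (t : W -> V) k :
  injective t -> (forall a b, E1 a b = E (t a) (t b)) ->
  union_of_planar E k -> union_of_planar E1 k.
Proof.
move=> tinj HE [F [HF Hc]].
exists (fun i a b => F i (t a) (t b)); split.
- move=> i; have [Pi Si] := HF i; split; first exact: planar_pull.
  by move=> a b /Si; rewrite HE.
- move=> a b; rewrite HE => /Hc [i Hi]; by exists i.
Qed.

Lemma union_comb (V V1 V2 : finType) (E : rel V) (E1 : rel V1) (E2 : rel V2)
  (s : V -> V1 + V2) k : injective s ->
  (forall x y, E x y = dside E1 E2 (s x) (s y)) ->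
  union_of_planar E1 k -> union_of_planar E2 k -> union_of_planar E k.
Proof.
move=> sinj HE [F1 [HF1 Hc1]] [F2 [HF2 Hc2]].
exists (fun i x y => dside (F1 i) (F2 i) (s x) (s y)); split.
- move=> i; have [P1 S1] := HF1 i; have [P2 S2] := HF2 i; split.
    by apply: (planar_comb sinj _ P1 P2).
  move=> x y; rewrite HE; case: (s x) => a; case: (s y) => b //=.
  + exact: S1.
  + exact: S2.
- move=> x y; rewrite HE; case: (s x) => a; case: (s y) => b //=.
  + by move=> /Hc1 [i Hi]; exists i.
  + by move=> /Hc2 [i Hi]; exists i.
Qed.

Lemma thickness_split (V V1 V2 : finType) (E : rel V) (E1 : rel V1) (E2 : rel V2)
  (s : V -> V1 + V2) (t1 : V1 -> V) (t2 : V2 -> V) :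
  irreflexive E -> irreflexive E1 -> irreflexive E2 ->
  injective s -> (forall a, s (t1 a) = inl a) -> (forall b, s (t2 b) = inr b) ->
  (forall x y, E x y = dside E1 E2 (s x) (s y)) ->
  thickness E = maxn (thickness E1) (thickness E2).
Proof.
move=> I I1 I2 sinj st1 st2 HE.
have [U Um] := thick_spec I; have [U1 Um1] := thick_spec I1; have [U2 Um2] := thick_spec I2.
have t1inj : injective t1.
  by move=> a b H; have := st1 a; rewrite H st1 => -[].
have t2inj : injective t2.
  by move=> a b H; have := st2 a; rewrite H st2 => -[].
apply/eqP; rewrite eqn_leq; apply/andP; split.
- apply: Um; apply: (union_comb sinj HE).
  + by apply: (union_mono U1); rewrite leq_maxl.
  + by apply: (union_mono U2); rewrite leq_maxr.
- rewrite geq_max; apply/andP; split.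
  + apply: Um1; apply: (union_restrict t1inj _ U) => a b; by rewrite HE !st1.
  + apply: Um2; apply: (union_restrict t2inj _ U) => a b; by rewrite HE !st2.
Qed.

Lemma cardP m p : #|{: 'I_m * 'I_p}| = m * p.
Proof. by rewrite card_prod !card_ord. Qed.

Definition pr m p (x : 'I_m * 'I_p) : 'I_(m * p) := cast_ord (cardP m p) (enum_rank x).
Definition unpr m p (i : 'I_(m * p)) : 'I_m * 'I_p := enum_val (cast_ord (esym (cardP m p)) i).

Lemma prK m p : cancel (@pr m p) (@unpr m p).
Proof. by move=> x; rewrite /pr /unpr cast_ordK enum_rankK. Qed.
Lemma unprK m p : cancel (@unpr m p) (@pr m p).
Proof. by move=> i; rewrite /pr /unpr enum_valK cast_ordKV. Qed.

Definition V0 m n p q := (('I_m + 'I_n) * ('I_p + 'I_q))%type.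
Definition W1 m n p q := ('I_(m * p) + 'I_(n * q))%type.
Definition W2 m n p q := ('I_(m * q) + 'I_(n * p))%type.

Definition sm m n p q (x : V0 m n p q) : W1 m n p q + W2 m n p q :=
  match x with
  | (inl a, inl c) => inl (inl (pr (a, c)))
  | (inr b, inr d) => inl (inr (pr (b, d)))
  | (inl a, inr d) => inr (inl (pr (a, d)))
  | (inr b, inl c) => inr (inr (pr (b, c)))
  end.

Definition tm m n p q (z : W1 m n p q + W2 m n p q) : V0 m n p q :=
  match z with
  | inl (inl i) => (inl (unpr i).1, inl (unpr i).2)
  | inl (inr i) => (inr (unpr i).1, inr (unpr i).2)
  | inr (inl i) => (inl (unpr i).1, inr (unpr i).2)
  | inr (inr i) => (inr (unpr i).1, inl (unpr i).2)
  end.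

Lemma smK m n p q : cancel (@sm m n p q) (@tm m n p q).
Proof. by case=> [] [a|b] [c|d] /=; rewrite prK. Qed.

Lemma tmK m n p q : cancel (@tm m n p q) (@sm m n p q).
Proof. by case=> [] [i|i] /=; rewrite -surjective_pairing unprK. Qed.

Lemma irr_Kbip a b : irreflexive (Kbip a b).
Proof. by case. Qed.

Lemma irr_kron (V W : finType) (E : rel V) (F : rel W) :
  irreflexive E -> irreflexive F -> irreflexive (kron E F).
Proof. by move=> HE _ x; rewrite /kron HE. Qed.

Theorem theorem3p6 (m n p q : nat) :
  0 < m -> 0 < n -> 0 < p -> 0 < q ->
  thickness (kron (Kbip m n) (Kbip p q)) =
  maxn (thickness (Kbip (m * p) (n * q))) (thickness (Kbip (m * q) (n * p))).
Proof.
move=> _ _ _ _.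
apply: (@thickness_split _ _ _ _ _ _ (@sm m n p q) (fun a => @tm m n p q (inl a)) (fun b => @tm m n p q (inr b))).
- apply: irr_kron; exact: irr_Kbip.
- exact: irr_Kbip.
- exact: irr_Kbip.
- exact: (can_inj (@smK m n p q)).
- by move=> a; rewrite tmK.
- by move=> b; rewrite tmK.
- by case=> [] [a|a] [c|c] [] [b|b] [d|d].
Qed.
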